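(* Let $f^*$ be a symmetric interpolation of a connectivity function $f$ on a finite set $V$. Let $S,T$ be disjoint subsets of $V$. If there exist distinct elements $a_1,\dots,a_\ell,b_1,\dots,b_\ell$ in $V-(S\cup T)$ such that (i) $f^*(S\cup\{a_i\},T\cup\{b_i\})>f^*(S,T)$ for all $i\in\{1,\dots,\ell\}$, (ii) $f^*(S\cup\{a_i\},T\cup\{b_j\})=f^*(S,T)$ for all $1\le i<j\le\ell$, (iii) $f^*(S\cup\{b_i\},T\cup\{a_j\})=f^*(S,T)$ for all $i,j\in\{1,\dots,\ell\}$, and (iv) $f^*(S\cup\{a_i\},T)=f^*(S,T\cup\{b_i\})=f^*(S,T)$ for all $i\in\{1,\dots,\ell\}$, then $\ell\le 2f^*(S,T)$.
   Context: A connectivity function on a finite set $V$ is a function $f:2^V\to\mathbb Z$ such that $f(X)=f(V-X)$ for all $X\subseteq V$, $f(X)+f(Y)\ge f(X\cup Y)+f(X\cap Y)$ for all $X,Y\subseteq V$, and $f(\emptyset)=0$. An interpolation of $f$ is a function $f^*$ defined on pairs $(X,Y)$ of disjoint subsets of $V$, with integer values, such that (i) $f^*(X,V-X)=f(X)$ for all $X\subseteq V$; (ii) if $C\cap D=\emptyset$, $A\subseteq C$, $B\subseteq D$ then $f^*(A,B)\le f^*(C,D)$; (iii) $f^*(A,B)+f^*(C,D)\ge f^*(A\cap C,B\cup D)+f^*(A\cup C,B\cap D)$ for all such pairs; (iv) $f^*(\emptyset,\emptyset)=f(\emptyset)$. The interpolation is symmetric if $f^*(X,Y)=f^*(Y,X)$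 for all disjoint $X,Y\subseteq V$. *)

(* Defs.v *)
From mathcomp Require Import all_boot all_order all_algebra.
Set Implicit Arguments. Unset Strict Implicit. Unset Printing Implicit Defensive.
Import Order.TTheory GRing.Theory Num.Theory.
Local Open Scope ring_scope.

Definition connectivity_function (V : finType) (f : {set V} -> int) : Prop :=
  [/\ forall X : {set V}, f X = f (~: X),
      forall X Y : {set V}, f (X :|: Y) + f (X :&: Y) <= f X + f Y
    & f set0 = 0].

(* f* is represented as a function on all pairs of subsets; only its values
   on pairs of disjoint subsets are constrained / used. *)
Definition interpolation (V : finType) (f : {set V} -> int)
    (fs : {set V} -> {set V} -> int) : Prop :=
  [/\ forall X : {set V}, fs X (~: X) = f X,
      forall A B C D : {set V}, [disjoint C & D] -> A \subset C -> B \subset D ->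
        fs A B <= fs C D,
      forall A B C D : {set V}, [disjoint A & B] -> [disjoint C & D] ->
        fs (A :&: C) (B :|: D) + fs (A :|: C) (B :&: D) <= fs A B + fs C D
    & fs set0 set0 = f set0].

Definition symmetric_interpolation (V : finType) (f : {set V} -> int)
    (fs : {set V} -> {set V} -> int) : Prop :=
  interpolation f fs /\
  forall X Y : {set V}, [disjoint X & Y] -> fs X Y = fs Y X.

(* Main.v *)
Require Import Defs.
From mathcomp Require Import all_boot all_order all_algebra.
From mathcomp Require Import zify.
Import Order.TTheory GRing.Theory Num.Theory.
Local Open Scope ring_scope.

Lemma disjP (V : finType) (X Y : {set V}) :
  (forall x, x \in X -> x \in Y -> False) -> [disjoint X & Y].
Proof.
move=> h; rewrite -setI_eq0; apply/eqP/setP => x; rewrite !inE.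
by apply/negbTE/negP => /andP [h1 h2]; exact: h x h1 h2.
Qed.

Lemma djE (V : finType) (X Y : {set V}) x :
  [disjoint X & Y] -> x \in X -> x \in Y -> False.
Proof.
rewrite -setI_eq0 => /eqP h hx hy; move: (h); move/setP/(_ x); by rewrite !inE hx hy.
Qed.

Lemma dj_meet (V : finType) (A B C D : {set V}) :
  [disjoint A & B] -> [disjoint C & D] -> [disjoint A :&: C & B :|: D].
Proof.
move=> h1 h2; apply: disjP => x; rewrite !inE => /andP [hA hC] /orP [hB|hD].
  exact: djE h1 hA hB.
exact: djE h2 hC hD.
Qed.

Lemma dj_join (V : finType) (A B C D : {set V}) :
  [disjoint A & B] -> [disjoint C & D] -> [disjoint A :|: C & B :&: D].
Proof.
move=> h1 h2; apply: disjP => x; rewrite !inE => /orP [hA|hC] /andP [hB hD].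
  exact: djE h1 hA hB.
exact: djE h2 hC hD.
Qed.

Lemma rclose (V : finType) (fs : {set V} -> {set V} -> int)
 (mono : forall A B C D : {set V}, [disjoint C & D] -> A \subset C -> B \subset D -> fs A B <= fs C D)
 (sub : forall A B C D : {set V}, [disjoint A & B] -> [disjoint C & D] ->
    fs (A :&: C) (B :|: D) + fs (A :|: C) (B :&: D) <= fs A B + fs C D)
 (I : finType) (P : pred I) (g : I -> V) (X Y : {set V}) (k : int) :
 fs X Y = k -> (forall i, P i -> fs X (g i |: Y) = k) ->
 [disjoint X & Y :|: \bigcup_(i | P i) [set g i]] ->
 fs X (Y :|: \bigcup_(i | P i) [set g i]) = k.
Proof.
move=> h0 hi.
apply: (big_ind (fun Z => [disjoint X & Y :|: Z] -> fs X (Y :|: Z) = k)).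
- by rewrite setU0.
- move=> Z1 Z2 h1 h2 hd.
  have d1 : [disjoint X & Y :|: Z1].
    apply: disjointWr hd; apply/subsetP => x; rewrite !inE => /orP [] ->; by rewrite ?orbT.
  have d2 : [disjoint X & Y :|: Z2].
    apply: disjointWr hd; apply/subsetP => x; rewrite !inE => /orP [] ->; by rewrite ?orbT.
  have e1 := h1 d1; have e2 := h2 d2.
  have := sub _ _ _ _ d1 d2; rewrite setIid setUid.
  have -> : (Y :|: Z1) :|: (Y :|: Z2) = Y :|: (Z1 :|: Z2).
    by apply/setP => x; rewrite !inE; case: (x \in Y); case: (x \in Z1); case: (x \in Z2).
  have lo : k <= fs X ((Y :|: Z1) :&: (Y :|: Z2)).
    rewrite -h0; apply: mono => //.
      apply: disjointWr d1; exact: subsetIl.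
    by apply/subsetP => x; rewrite !inE => ->.
  have hi2 : k <= fs X (Y :|: (Z1 :|: Z2)).
    by rewrite -h0; apply: mono => //; apply/subsetP => x; rewrite !inE => ->.
  lia.
- by move=> i Pi _; rewrite setUC; exact: hi.
Qed.

Lemma lclose (V : finType) (fs : {set V} -> {set V} -> int)
 (mono : forall A B C D : {set V}, [disjoint C & D] -> A \subset C -> B \subset D -> fs A B <= fs C D)
 (sub : forall A B C D : {set V}, [disjoint A & B] -> [disjoint C & D] ->
    fs (A :&: C) (B :|: D) + fs (A :|: C) (B :&: D) <= fs A B + fs C D)
 (I : finType) (P : pred I) (g : I -> V) (X Y : {set V}) (k : int) :
 fs X Y = k -> (forall i, P i -> fs (g i |: X) Y = k) ->
 [disjoint X :|: \bigcup_(i | P i) [set g i] & Y] ->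
 fs (X :|: \bigcup_(i | P i) [set g i]) Y = k.
Proof.
move=> h0 hi.
apply: (big_ind (fun Z => [disjoint X :|: Z & Y] -> fs (X :|: Z) Y = k)).
- by rewrite setU0.
- move=> Z1 Z2 h1 h2 hd.
  have d1 : [disjoint X :|: Z1 & Y].
    apply: disjointWl hd; apply/subsetP => x; rewrite !inE => /orP [] ->; by rewrite ?orbT.
  have d2 : [disjoint X :|: Z2 & Y].
    apply: disjointWl hd; apply/subsetP => x; rewrite !inE => /orP [] ->; by rewrite ?orbT.
  have e1 := h1 d1; have e2 := h2 d2.
  have := sub _ _ _ _ d1 d2; rewrite setIid setUid.
  have -> : (X :|: Z1) :|: (X :|: Z2) = X :|: (Z1 :|: Z2).
    by apply/setP => x; rewrite !inE; case: (x \in X); case: (x \in Z1); case: (x \in Z2).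
  have lo : k <= fs ((X :|: Z1) :&: (X :|: Z2)) Y.
    rewrite -h0; apply: mono => //.
      apply: disjointWl d1; exact: subsetIl.
    by apply/subsetP => x; rewrite !inE => ->.
  have hi2 : k <= fs (X :|: (Z1 :|: Z2)) Y.
    by rewrite -h0; apply: mono => //; apply/subsetP => x; rewrite !inE => ->.
  lia.
- by move=> i Pi _; rewrite setUC; exact: hi.
Qed.

Ltac dj aS aT bS bT ab ST S T :=
  apply: disjP => ? ; rewrite ?inE => ? ?;
  repeat match goal with
   | H : is_true (_ || _) |- _ => case/orP: H => H
   | H : is_true (_ \in _) |- _ =>
       let j := fresh "j" in case/bigcupP: H => j _ H; rewrite inE in H
   | H : is_true (?y == _) |- _ => is_var y; move/eqP: H => H; subst y
   end;
  first
  [ match goal with H : is_true _, H' : is_true _ |- _ => exact: (ST _ H H') end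
  | match goal with H : is_true _ |- _ => by rewrite ?aS ?bS ?aT ?bT ?ab in H end
  | match goal with H : is_true _ |- _ => by rewrite eq_sym ?ab in H end ].

Theorem lemma4p1 (V : finType) (f : {set V} -> int)
    (fs : {set V} -> {set V} -> int) (S T : {set V}) (l : nat)
    (a b : 'I_l -> V) :
  connectivity_function f ->
  symmetric_interpolation f fs ->
  [disjoint S & T] ->
  injective a -> injective b -> (forall i j, a i != b j) ->
  (forall i, a i \notin S :|: T) -> (forall i, b i \notin S :|: T) ->
  (forall i, fs (a i |: S) (b i |: T) > fs S T) ->
  (forall i j : 'I_l, (i < j)%N -> fs (a i |: S) (b j |: T) = fs S T) ->
  (forall i j, fs (b i |: S) (a j |: T) = fs S T) ->
  (forall i, fs (a i |: S) T = fs S T /\ fs S (b i |: T) = fs S T) ->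
  (l%:Z <= 2 * fs S T).
Proof.
move=> [_ _ f0] [[_ mono sub fs0] sym] dST _ _ hab haST hbST hi hii hiii hiv.
set k := fs S T.
have aS i : (a i \in S) = false by apply/negbTE; move: (haST i); rewrite inE negb_or => /andP [].
have aT i : (a i \in T) = false by apply/negbTE; move: (haST i); rewrite inE negb_or => /andP [].
have bS i : (b i \in S) = false by apply/negbTE; move: (hbST i); rewrite inE negb_or => /andP [].
have bT i : (b i \in T) = false by apply/negbTE; move: (hbST i); rewrite inE negb_or => /andP [].
have ab i j : (a i == b j) = false by apply/negbTE.
have ST x : x \in S -> x \in T -> False by exact: djE dST.
have nonneg (X Y : {set V}) : [disjoint X & Y] -> 0 <= fs X Y.
  move=> d; rewrite -f0 -fs0; apply: mono => //; exact: sub0set.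
pose Aall := \bigcup_(j : 'I_l | true) [set a j].
pose Bge n := \bigcup_(j : 'I_l | (n <= j)%N) [set b j].
pose X' := S :|: (T :|: Aall).
have dXB n : [disjoint X' & Bge n] by rewrite /X' /Aall /Bge; dj aS aT bS bT ab ST S T.
have chain : forall d n, (n + d = l)%N -> d%:Z <= fs X' (Bge n).
  elim=> [|d IH] n hn; first exact: nonneg.
  have ltn : (n < l)%N by lia.
  pose i := Ordinal ltn.
  have hk : fs (a i |: S) (T :|: Bge n.+1) = k.
    apply: rclose => //.
    - by case: (hiv i).
    - by move=> j hj; apply: hii.
    - rewrite /Bge; dj aS aT bS bT ab ST S T.
  have d1 : [disjoint a i |: S & T :|: Bge n.+1] by rewrite /Bge; dj aS aT bS bT ab ST S T.
  have := sub _ _ _ _ d1 (dXB n).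
  have m1 : fs (a i |: S) (b i |: T) <= fs ((a i |: S) :&: X') ((T :|: Bge n.+1) :|: Bge n).
    apply: mono.
    - exact: dj_meet d1 (dXB n).
    - apply/subsetP => x; rewrite /X' !inE => /orP [/eqP ->|hx]; last by rewrite hx !orbT.
      rewrite eqxx /=; apply/orP; right; apply/orP; right.
      by apply/bigcupP; exists i => //; rewrite inE.
    - apply/subsetP => x; rewrite !inE => /orP [/eqP ->|->]; rewrite ?orbT //.
      by apply/orP; right; apply/bigcupP; exists i => //; rewrite inE.
  have m2 : fs X' (Bge n.+1) <= fs ((a i |: S) :|: X') ((T :|: Bge n.+1) :&: Bge n).
    apply: mono.
    - exact: dj_join d1 (dXB n).
    - by apply/subsetP => x; rewrite !inE => ->; rewrite orbT.
    - apply/subsetP => x hx; rewrite !inE hx orbT /=.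
      case/bigcupP: hx => j hj hx; apply/bigcupP; exists j => //; exact: ltnW.
  have := IH n.+1 ltac:(lia).
  have := hi i; rewrite -/k.
  lia.
have k1 : fs S (T :|: Bge 0%N) = k.
  apply: rclose => //.
  - by move=> j _; case: (hiv j).
  - rewrite /Bge; dj aS aT bS bT ab ST S T.
have sand1 i : fs (b i |: S) T = k.
  apply/eqP; rewrite eq_le; apply/andP; split.
    have e := hiii i i; rewrite -/k in e; rewrite -e; apply: mono => //; first (dj aS aT bS bT ab ST S T).
    by apply/subsetP => x; rewrite !inE => ->; rewrite orbT.
  apply: mono => //; first (dj aS aT bS bT ab ST S T).
  by apply/subsetP => x; rewrite !inE => ->; rewrite orbT.
have sand2 j : fs S (a j |: T) = k.
  apply/eqP; rewrite eq_le; apply/andP; split.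
    have e := hiii j j; rewrite -/k in e; rewrite -e; apply: mono => //; first (dj aS aT bS bT ab ST S T).
    by apply/subsetP => x; rewrite !inE => ->; rewrite orbT.
  apply: mono => //; first (dj aS aT bS bT ab ST S T).
  by apply/subsetP => x; rewrite !inE => ->; rewrite orbT.
have k2 : fs (S :|: Bge 0%N) (T :|: Aall) = k.
  apply: rclose => //.
  - apply: lclose => //.
    rewrite /Bge; dj aS aT bS bT ab ST S T.
  - move=> j _; apply: lclose => //.
    rewrite /Bge; dj aS aT bS bT ab ST S T.
  - rewrite /Bge /Aall; dj aS aT bS bT ab ST S T.
have d3 : [disjoint S & T :|: Bge 0%N] by rewrite /Bge; dj aS aT bS bT ab ST S T.
have d4 : [disjoint T :|: Aall & S :|: Bge 0%N] by rewrite /Bge /Aall; dj aS aT bS bT ab ST S T.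
have k3 : fs (T :|: Aall) (S :|: Bge 0%N) = k by rewrite sym // disjoint_sym.
have := sub _ _ _ _ d3 d4.
have n1 := nonneg _ _ (@dj_meet _ _ _ _ _ d3 d4).
have m3 : fs X' (Bge 0%N) <= fs (S :|: (T :|: Aall)) ((T :|: Bge 0%N) :&: (S :|: Bge 0%N)).
  apply: mono => //.
  - exact: dj_join d3 d4.
  - by apply/subsetP => x hx; rewrite !inE hx !orbT.
have := chain l 0%N ltac:(lia).
lia.
Qed.
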